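(* Let $u_1,u_2,u_3,u_4$ be Laurent polynomials with symmetry types $\mathrm{S}u_j(z)=\epsilon_jz^{c_j}$, $\epsilon_j\in\{\pm1\}$, $c_j\in\mathbb Z$, $j=1,2,3,4$, and suppose $\mathrm{S}u_1/\mathrm{S}u_2=\mathrm{S}u_3/\mathrm{S}u_4$. Define $$u_5(z):=u_1(z)u_3(z)+z^{c_1}u_2^\star(z)u_4(z),\qquad u_6(z):=u_2(z)u_3(z)+z^{c_1}u_1^\star(z)u_4(z).$$ Then $\mathrm{S}u_5(z)=\epsilon_1\epsilon_3z^{c_1+c_3}$, $\mathrm{S}u_6(z)=\epsilon_2\epsilon_3z^{c_2+c_3}$, $\mathrm{S}u_5/\mathrm{S}u_6=\mathrm{S}u_1/\mathrm{S}u_2=\mathrm{S}u_3/\mathrm{S}u_4$, and $$u_5u_5^\star-u_6u_6^\star=(u_1u_1^\star-u_2u_2^\star)(u_3u_3^\star-u_4u_4^\star).$$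
   Context: Laurent polynomial $u(z)=\sum_ku(k)z^k$ with finitely many nonzero complex coefficients; $u^\star(z):=\sum_k\overline{u(k)}z^{-k}$. $u$ has symmetry of type $\epsilon z^c$ if $u(z)=\epsilon z^cu(z^{-1})$; for nonzero $u$, $\mathrm{S}u(z):=u(z)/u(z^{-1})$; the zero polynomial has symmetry of every type. *)

(* Defs.v *)
From HB Require Import structures.
From mathcomp Require Import all_boot all_order all_algebra.
From mathcomp Require Import finmap.
Set Implicit Arguments. Unset Strict Implicit. Unset Printing Implicit Defensive.
Import Order.TTheory GRing.Theory Num.Theory.
Local Open Scope fset_scope.
Local Open Scope ring_scope.

(* A Laurent polynomial u(z) = \sum_k u(k) z^k with coefficients in C is a
   finitely supported coefficient function int -> C (default value 0). *)
Definition laurent (C : numClosedFieldType) := {fsfun int -> C with 0}.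

Section Laurent.
Variable C : numClosedFieldType.

Definition lzero : laurent C := [fsfun].

Definition lmono (a : C) (c : int) : laurent C := [fsfun k in [fset c] => a].

Definition ladd (u v : laurent C) : laurent C :=
  [fsfun k in finsupp u `|` finsupp v => u k + v k].
Definition lsub (u v : laurent C) : laurent C :=
  [fsfun k in finsupp u `|` finsupp v => u k - v k].

(* product: (uv)(k) = \sum_i u(i) v(k - i) (the sum is over the support of u;
   outside the sumset supp u + supp v this sum is 0) *)
Definition lmul (u v : laurent C) : laurent C :=
  [fsfun k in [fset (i + j) | i in finsupp u, j in finsupp v] =>
     \sum_(i <- finsupp u) u i * v (k - i)].

(* u(z^{-1}) = \sum_k u(-k) z^k *)
Definition lrefl (u : laurent C) : laurent C :=
  [fsfun k in [fset - i | i in finsupp u] => u (- k)].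

(* u^star(z) = \sum_k conj(u(k)) z^{-k} *)
Definition lstar (u : laurent C) : laurent C :=
  [fsfun k in [fset - i | i in finsupp u] => (u (- k))^*].

Definition sym_type (u : laurent C) (eps : C) (c : int) : Prop :=
  u = lmul (lmono eps c) (lrefl u).

(* "S u (z) = eps z^c" for nonzero u, where S u(z) = u(z)/u(z^{-1}):
   u is nonzero and u(z) = eps z^c u(z^{-1}). *)
Definition Sym_is (u : laurent C) (eps : C) (c : int) : Prop :=
  u <> lzero /\ sym_type u eps c.

End Laurent.

(* Main.v *)
Require Import Defs.
From HB Require Import structures.
From mathcomp Require Import all_boot all_order all_algebra.
From mathcomp Require Import finmap.
From mathcomp Require Import ring zify.
Import Order.TTheory GRing.Theory Num.Theory.
Local Open Scope fset_scope.
Local Open Scope ring_scope.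

Section L.
Variable C : numClosedFieldType.
Implicit Types u v : laurent C.

Definition ev u (z : C) : C := \sum_(i <- finsupp u) u i * z ^ i.

Lemma ev_incl u (S : {fset int}) z : finsupp u `<=` S ->
  ev u z = \sum_(i <- S) u i * z ^ i.
Proof.
move=> sub; rewrite /ev (big_fset_incl _ sub) // => x _.
by rewrite mem_finsupp negbK => /eqP ->; rewrite mul0r.
Qed.

Lemma ev_gen (f : laurent C) (S : {fset int}) F z :
  (forall k, f k = if k \in S then F k else 0) ->
  ev f z = \sum_(k <- S) F k * z ^ k.
Proof.
move=> hf; rewrite (ev_incl _ S).
  by apply: eq_big_seq => k kS; rewrite hf kS.
apply/fsubsetP => k; rewrite mem_finsupp hf; case: ifP => //; by rewrite eqxx.
Qed.

Lemma ev_add u v z : ev (ladd u v) z = ev u z + ev v z.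
Proof.
rewrite (ev_gen _ (finsupp u `|` finsupp v) (fun k => u k + v k)).
  rewrite (ev_incl u (finsupp u `|` finsupp v)) ?fsubsetUl //.
  rewrite (ev_incl v (finsupp u `|` finsupp v)) ?fsubsetUr //.
  by rewrite -big_split; apply: eq_bigr => i _; rewrite mulrDl.
by move=> k; rewrite /ladd fsfunE.
Qed.

Lemma ev_sub u v z : ev (lsub u v) z = ev u z - ev v z.
Proof.
rewrite (ev_gen _ (finsupp u `|` finsupp v) (fun k => u k - v k)).
  rewrite (ev_incl u (finsupp u `|` finsupp v)) ?fsubsetUl //.
  rewrite (ev_incl v (finsupp u `|` finsupp v)) ?fsubsetUr //.
  by rewrite -sumrB; apply: eq_bigr => i _; rewrite mulrBl.
by move=> k; rewrite /lsub fsfunE.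
Qed.

Lemma ev_mono a c z : ev (lmono a c) z = a * z ^ c.
Proof.
rewrite (ev_gen _ [fset c] (fun _ => a)) ?big_seq_fset1 //.
by move=> k; rewrite /lmono fsfunE.
Qed.

Lemma shift_sum v (i : int) (z : C) : 
  \sum_(k <- [fset i + j | j in finsupp v]) v (k - i) * z ^ (k - i) = ev v z.
Proof.
rewrite big_imfset /=; last by move=> a b _ _ /addrI.
by apply: eq_bigr => j _; rewrite (addrC i) addrK.
Qed.

Lemma ev_mul u v (z : C) : z != 0 -> ev (lmul u v) z = ev u z * ev v z.
Proof.
move=> z0.
set S2 := [fset (i + j) | i in finsupp u, j in finsupp v].
rewrite (ev_gen (lmul u v) S2 (fun k => \sum_(i <- finsupp u) u i * v (k - i))); last first.
  by move=> k; rewrite /lmul fsfunE.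
under eq_bigr => k _ do rewrite mulr_suml.
rewrite exchange_big /= {2}/ev mulr_suml; apply: eq_big_seq => i iu.
have -> : \sum_(k <- S2) u i * v (k - i) * z ^ k
   = u i * z ^ i * \sum_(k <- S2) v (k - i) * z ^ (k - i).
  rewrite mulr_sumr; apply: eq_bigr => k _.
  have -> : z ^ k = z ^ i * z ^ (k - i) by rewrite -expfzDr // addrC subrK.
  by rewrite !mulrA (mulrAC (u i)).
congr (_ * _); rewrite -[RHS]/(ev v z) -(shift_sum v i z).
have sub : [fset i + j | j in finsupp v] `<=` S2.
  apply/fsubsetP => k /imfsetP [j /= jv ->].
  by apply/imfset2P; exists i => //; exists j.
rewrite (big_fset_incl _ sub) //.
move=> k _ kn.
have : v (k - i) = 0.
  apply/eqP; rewrite -[_ == _]negbK -mem_finsupp; apply: contra kn => h.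
  by apply/imfsetP; exists (k - i) => //; rewrite addrC subrK.
by move=> ->; rewrite mul0r.
Qed.


Lemma ev_refl u (z : C) : ev (lrefl u) z = ev u z^-1.
Proof.
rewrite (ev_gen (lrefl u) [fset - i | i in finsupp u] (fun k => u (- k))); last first.
  by move=> k; rewrite /lrefl fsfunE.
rewrite big_imfset /=; last by move=> a b _ _ /oppr_inj.
by apply: eq_bigr => i _; rewrite opprK exprz_inv.
Qed.

Lemma ev_star u (z : C) : z != 0 -> ev (lstar u) z = (ev u (z^*)^-1)^*.
Proof.
move=> z0.
rewrite (ev_gen (lstar u) [fset - i | i in finsupp u] (fun k => (u (- k))^*)); last first.
  by move=> k; rewrite /lstar fsfunE.
rewrite big_imfset /=; last by move=> a b _ _ /oppr_inj.
rewrite rmorph_sum; apply: eq_bigr => i _; rewrite opprK rmorphM exprz_inv.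
by rewrite rmorphXz /= ?conjCK // unitfE conjC_eq0.
Qed.

Lemma ev_zero (w : laurent C) : (forall z : C, z != 0 -> ev w z = 0) -> forall k, w k = 0.
Proof.
move=> hw k.
case: (boolP (k \in finsupp w)) => kS; last first.
  by apply/eqP; move: kS; rewrite mem_finsupp negbK.
set S := finsupp w.
set N := (\sum_(i <- S) `|i|)%N.
have hN : forall i, i \in S -> 0 <= i + (N:int).
  move=> i iS; have : (`|i| <= N)%N by rewrite /N (big_fsetD1 i) //= leq_addr.
  lia.
set p : {poly C} := \sum_(i <- S) w i *: 'X^(absz (i + N%:Z)).
have hp : forall z : C, z != 0 -> p.[z] = 0.
  move=> z z0; rewrite horner_sum.
  transitivity (z ^ (N:int) * ev w z); last by rewrite hw // mulr0.
  rewrite /ev mulr_sumr; apply: eq_big_seq => i iS.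
  rewrite hornerZ hornerXn exprnP.
  have -> : ((absz (i + N%:Z)):int) = i + N by have := hN i iS; lia.
  rewrite expfzDr //; ring.
have p0 : p = 0.
  apply/eqP; apply/negP => /negP pn0.
  set rs := [seq (n.+1)%:R | n <- iota 0 (size p)] : seq C.
  have H1 : all (root p) rs.
    apply/allP => x /mapP [n _ ->]; apply/rootP; apply: hp; by rewrite pnatr_eq0.
  have H2 : uniq rs.
    rewrite map_inj_uniq ?iota_uniq // => a b /eqP; rewrite eqr_nat eqSS => /eqP //.
  by have := max_poly_roots pn0 H1 H2; rewrite size_map size_iota ltnn.
have : p`_(absz (k + N%:Z)) = w k.
  rewrite coef_sumMXn big_mkcond (big_fsetD1 k) //= eqxx big1_fset ?addr0 //.
  move=> i; rewrite in_fsetD1 => /andP [ik iS] _.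
  case: eqP => // habs; exfalso; move: ik; rewrite -(negbK (i != k)) => /negP; apply.
  apply/eqP; have := hN i iS; have := hN k kS; lia.
rewrite p0 coef0 => wk0; move: kS; by rewrite mem_finsupp -wk0 eqxx.
Qed.

Lemma ev_ext u v : (forall z : C, z != 0 -> ev u z = ev v z) -> u = v.
Proof.
move=> h; have h0 := @ev_zero (lsub u v) (fun z z0 => etrans (ev_sub u v z) (etrans (congr1 (fun x => x - ev v z) (h z z0)) (subrr _))).
apply/fsfunP => k; have := h0 k; rewrite /lsub fsfunE; case: ifP.
  by move=> _ /eqP; rewrite subr_eq0 => /eqP.
move=> /negbT; rewrite in_fsetU negb_or !mem_finsupp !negbK => /andP [/eqP -> /eqP ->] //.
Qed.

Lemma sym_ev u e c (z : C) : z != 0 -> sym_type u e c -> ev u z = e * z ^ c * ev u z^-1.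
Proof. by move=> z0 h; rewrite {1}h ev_mul // ev_mono ev_refl. Qed.

End L.

Theorem lemma3p15 (C : numClosedFieldType)
  (u1 u2 u3 u4 : laurent C) (e1 e2 e3 e4 : C) (c1 c2 c3 c4 : int)
  (he1 : e1 = 1 \/ e1 = -1) (he2 : e2 = 1 \/ e2 = -1)
  (he3 : e3 = 1 \/ e3 = -1) (he4 : e4 = 1 \/ e4 = -1)
  (hS1 : Sym_is u1 e1 c1) (hS2 : Sym_is u2 e2 c2)
  (hS3 : Sym_is u3 e3 c3) (hS4 : Sym_is u4 e4 c4)
  (hratio : lmono (e1 / e2) (c1 - c2) = lmono (e3 / e4) (c3 - c4)) :
  let u5 := ladd (lmul u1 u3) (lmul (lmul (lmono 1 c1) (lstar u2)) u4) in
  let u6 := ladd (lmul u2 u3) (lmul (lmul (lmono 1 c1) (lstar u1)) u4) in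
  sym_type u5 (e1 * e3) (c1 + c3) /\
      sym_type u6 (e2 * e3) (c2 + c3) /\
      lmono ((e1 * e3) / (e2 * e3)) ((c1 + c3) - (c2 + c3))
        = lmono (e1 / e2) (c1 - c2)
      /\ lmono (e1 / e2) (c1 - c2) = lmono (e3 / e4) (c3 - c4)
    /\ lsub (lmul u5 (lstar u5)) (lmul u6 (lstar u6))
      = lmul (lsub (lmul u1 (lstar u1)) (lmul u2 (lstar u2)))
             (lsub (lmul u3 (lstar u3)) (lmul u4 (lstar u4))).
Proof.
move=> u5 u6.
case: hS1 => _ s1; case: hS2 => _ s2; case: hS3 => _ s3; case: hS4 => _ s4.
have hr := congr1 (fun f : laurent C => f (c1 - c2)) hratio.
rewrite /lmono /= !fsfunE !inE eqxx in hr; move: hr.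
have e0 : forall e : C, e = 1 \/ e = -1 -> e != 0.
  by move=> e [] ->; rewrite ?oppr_eq0 oner_eq0.
case: eqP => [hc hee|_ /eqP]; last first.
  by rewrite mulf_eq0 invr_eq0 (negPf (e0 _ he1)) (negPf (e0 _ he2)).
have hc1 : c1 = c2 + c3 - c4 by move: hc; lia.
have hinv : forall e : C, e = 1 \/ e = -1 -> e^-1 = e by move=> e [] ->; rewrite ?invrN invr1.
have sq : forall e : C, e = 1 \/ e = -1 -> e * e = 1 by move=> e [] ->; rewrite ?mulrNN mulr1.
have ce : forall e : C, e = 1 \/ e = -1 -> e^* = e by move=> e [] ->; rewrite ?rmorphN rmorph1.
have he1' : e1 = e2 * e3 * e4.
  have h := hee; rewrite (hinv _ he2) (hinv _ he4) in h.
  by rewrite -[e1]mulr1 -(sq e2 he2) mulrA h; ring.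
split; last split; last split; last split.
- rewrite /sym_type; apply: ev_ext => z z0.
  have v0 : z^-1 != 0 by rewrite invr_eq0.
  have w0 : (z^*)^-1 != 0 by rewrite invr_eq0 conjC_eq0.
  rewrite (ev_mul _ _ _ _ z0) ev_mono ev_refl /u5 !ev_add.
  rewrite !(ev_mul _ _ _ _ z0) !(ev_mul _ _ _ _ v0) !ev_mono !(ev_star _ _ _ z0) !(ev_star _ _ _ v0).
  rewrite fmorphV /= invrK.
  rewrite (sym_ev _ _ _ _ _ w0 s2) invrK rmorphM rmorphM /= (ce _ he2).
  rewrite rmorphXz /=; last by rewrite unitfE.
  rewrite fmorphV /= conjCK.
  rewrite (sym_ev _ _ _ _ _ v0 s1) (sym_ev _ _ _ _ _ v0 s3) (sym_ev _ _ _ _ _ v0 s4) !invrK.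
  rewrite !exprz_inv -!invr_expz hc1 he1'.
  rewrite !expfzDr // -!invr_expz.
  have q2 : z ^ c2 != 0 by rewrite expfz_neq0.
  have q3 : z ^ c3 != 0 by rewrite expfz_neq0.
  have q4 : z ^ c4 != 0 by rewrite expfz_neq0.
  move: q2 q3 q4; set p2 := z ^ c2; set p3 := z ^ c3; set p4 := z ^ c4 => q2 q3 q4.
  case: he2 => ->; case: he3 => ->; case: he4 => ->; by field; rewrite q2 q3 q4.
- rewrite /sym_type; apply: ev_ext => z z0.
  have v0 : z^-1 != 0 by rewrite invr_eq0.
  have w0 : (z^*)^-1 != 0 by rewrite invr_eq0 conjC_eq0.
  rewrite (ev_mul _ _ _ _ z0) ev_mono ev_refl /u6 !ev_add.
  rewrite !(ev_mul _ _ _ _ z0) !(ev_mul _ _ _ _ v0) !ev_mono !(ev_star _ _ _ z0) !(ev_star _ _ _ v0).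
  rewrite fmorphV /= invrK.
  rewrite (sym_ev _ _ _ _ _ w0 s1) invrK rmorphM rmorphM /= (ce _ he1).
  rewrite rmorphXz /=; last by rewrite unitfE.
  rewrite fmorphV /= conjCK.
  rewrite (sym_ev _ _ _ _ _ v0 s2) (sym_ev _ _ _ _ _ v0 s3) (sym_ev _ _ _ _ _ v0 s4) !invrK.
  rewrite !exprz_inv -!invr_expz hc1 he1'.
  rewrite !expfzDr // -!invr_expz.
  have q2 : z ^ c2 != 0 by rewrite expfz_neq0.
  have q3 : z ^ c3 != 0 by rewrite expfz_neq0.
  have q4 : z ^ c4 != 0 by rewrite expfz_neq0.
  move: q2 q3 q4; set p2 := z ^ c2; set p3 := z ^ c3; set p4 := z ^ c4 => q2 q3 q4.
  case: he2 => ->; case: he3 => ->; case: he4 => ->; by field; rewrite q2 q3 q4.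
- congr lmono; last by ring.
  by field; rewrite (e0 _ he2) (e0 _ he3).
- exact: hratio.
- apply: ev_ext => z z0.
  have w0 : (z^*)^-1 != 0 by rewrite invr_eq0 conjC_eq0.
  have zz : ((z^*)^-1)^*^-1 = z by rewrite fmorphV /= conjCK invrK.
  rewrite /u5 /u6 !ev_sub !(ev_mul _ _ _ _ z0) !ev_sub !(ev_star _ _ _ z0) !ev_add.
  rewrite !(ev_mul _ _ _ _ z0) !(ev_mul _ _ _ _ w0) !ev_mono !(ev_star _ _ _ z0) !(ev_star _ _ _ w0) zz.
  rewrite !rmorphD !rmorphM /= !conjCK rmorph1.
  rewrite rmorphXz /=; last by rewrite unitfE.
  rewrite fmorphV /= conjCK exprz_inv -invr_expz.
  set a1 := ev C u1 z; set a2 := ev C u2 z; set a3 := ev C u3 z; set a4 := ev C u4 z.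
  set b1 := (ev C u1 _)^*; set b2 := (ev C u2 _)^*; set b3 := (ev C u3 _)^*; set b4 := (ev C u4 _)^*.
  set p := z ^ c1.
  have p0 : z ^ c1 != 0 by rewrite expfz_neq0.
  by field.
Qed.
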